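(* Let $\mathbb{P}$ and $F_b$ be as in the context. For any $\varepsilon>0$ there exist $\delta=\delta(\varepsilon)>0$, independent of $\Lambda$, and an event $B_\varepsilon$ (in the variables $(J,\vec E)$) with $\mathbb{P}(B_\varepsilon)>1-\varepsilon$ such that on $B_\varepsilon$, $$\#\{b\in\Lambda^*:|F_b(J_\Lambda)|>\delta\}>(1-\varepsilon)|\Lambda^*|.$$
   Context: $\Lambda\subset\mathbb{Z}^d$ is a finite cube centred at the origin; $\Lambda^*$ its set of nearest-neighbour edges. Couplings $J=(J_e)$ on all nearest-neighbour edges of $\mathbb{Z}^d$ are i.i.d. standard Gaussian with law $\nu$; $J'$ an independent copy; $J_\Lambda=(J_e)_{e\in\Lambda^*}$, $J_{\Lambda^c}$ the rest. For spins $\eta$ and $e=\{x,y\}$, $\eta_e=\eta_x\eta_y$; $\mathcal S_\Lambda$ is the set of edge configurations on $\Lambda^*$ induced by spin configurations. $H_{\Lambda,J}(\eta)=-\sum_{e\in\Lambda^*}J_e\eta_e$. Metastate representation: for $B_n=[-n,n]^d\supset\Lambda$ and a fixed coupling-independent boundary condition, let $E_n(\eta,\eta')$ be the difference of the energies, from edges outside $\Lambda^*$, of the minimizers of the $B_n$ Hamiltonian constrained to equal $\eta$, resp. $\eta'$, on $\Lambda$. Along a subsequence the law of $(J,\vec E_n)$ converges weakly to that of some $(J,\vec E)$ with $E(\eta,\eta)=0$, $E(\eta,\eta'')=E(\eta,\eta')+E(\eta',\eta'')$ and $(J_{\Lambda^c},\vec E)$ independent of $J_\Lambda$; $\vec E$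 is regarded as indexed by $\mathcal S_\Lambda$; $\kappa_{J_{\Lambda^c}}(d\vec E)$ is the conditional law of $\vec E$ given $J$. Set $d\mathbb{P}=d\nu(J)\,d\nu(J')\,d\kappa_{J_{\Lambda^c}}(\vec E)$. Given $\vec E$, the critical set is $\mathcal C=\bigcup_{\eta\ne\eta'}\{J_\Lambda:\sum_eJ_e(\eta_e-\eta'_e)=E(\eta,\eta')\}$; for $J_\Lambda\notin\mathcal C$, $\eta\prec\eta'$ iff $E(\eta,\eta')+H_{\Lambda,J}(\eta)-H_{\Lambda,J}(\eta')<0$ (a strict total order), and $\sigma^{\pm,b}(J_\Lambda)$ is the $\prec$-minimal element among $\eta$ with $\eta_b=\pm1$. The flexibility of the edge $b$ is $F_b(J_\Lambda)=\big|-\sum_{e\in\Lambda^*}J_e(\sigma^{+,b}_e(J_\Lambda)-\sigma^{-,b}_e(J_\Lambda))+E(\sigma^{+,b}(J_\Lambda),\sigma^{-,b}(J_\Lambda))\big|$, extended continuously to all of $\mathbb{R}^{\Lambda^*}$. *)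

(* Defs.v *)
From HB Require Import structures.
From mathcomp Require Import all_boot all_order all_algebra.
From mathcomp Require Import all_classical all_reals all_analysis.
Set Implicit Arguments. Unset Strict Implicit. Unset Printing Implicit Defensive.
Import Order.TTheory GRing.Theory Num.Theory.
Local Open Scope classical_set_scope.
Local Open Scope ring_scope.

(* Sites of the cube Lambda = [-L, L]^d : coordinate i of x is (x i) - L. *)
Definition site (d L : nat) := {ffun 'I_d -> 'I_(2 * L + 1)}.

Definition adjb d L (x y : site d L) : bool :=
  [exists i : 'I_d, (((x i).+1 == y i :> nat) || ((y i).+1 == x i :> nat))
                    && [forall j : 'I_d, (j != i) ==> (x j == y j)]].

Definition edge d L :=
  {e : {set site d L} | [exists x, exists y, adjb x y && (e == finset.setU (finset.set1 x) (finset.set1 y))]}.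

(* spin configurations on Lambda (true = +1) and edge configurations on Lambda^* *)
Definition spin d L := {ffun site d L -> bool}.
Definition edgeconf d L := {ffun edge d L -> bool}.

(* eta_e = eta_x eta_y, encoded as a boolean (true = +1) *)
Definition induced d L (eta : spin d L) : edgeconf d L :=
  [ffun e : edge d L => [forall x in val e, forall y in val e, eta x == eta y]].

Definition SL d L := {c : edgeconf d L | [exists eta : spin d L, c == induced eta]}.

Definition sgnb {R : ringType} (b : bool) : R := if b then 1 else -1.

Definition ev {R : ringType} d L (s : SL d L) (e : edge d L) : R := sgnb (val s e).

Definition ham {R : ringType} d L (J : edge d L -> R) (s : SL d L) : R :=
  - \sum_(e : edge d L) J e * ev s e.

Definition cocycle {R : ringType} d L (E : SL d L -> SL d L -> R) : Prop :=
  (forall s, E s s = 0) /\ (forall s s' s'', E s s'' = E s s' + E s' s'').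

(* non-strict version of the order: eta "precedes or ties" eta' *)
Definition prec_le {R : realDomainType} d L (J : edge d L -> R)
  (E : SL d L -> SL d L -> R) (s s' : SL d L) : bool :=
  E s s' + ham J s - ham J s' <= 0.

Definition sigma {R : realDomainType} d L (J : edge d L -> R)
  (E : SL d L -> SL d L -> R) (b : edge d L) (pm : bool) : option (SL d L) :=
  [pick s : SL d L | (val s b == pm)
      && [forall s' : SL d L, (val s' b == pm) ==> prec_le J E s s']].

Definition flex {R : realDomainType} d L (J : edge d L -> R)
  (E : SL d L -> SL d L -> R) (b : edge d L) : R :=
  match sigma J E b true, sigma J E b false with
  | Some sp, Some sm =>
      `| - (\sum_(e : edge d L) J e * (ev sp e - ev sm e)) + E sp sm |
  | _, _ => 0
  end.

(* J_Lambda = (J_b)_b are mutually independent and jointly independent of E: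
   the product rule on the generating pi-system of measurable rectangles. *)
Definition indep_JE {R : realType} {dO : measure_display} {Omega : measurableType dO}
  (P : probability Omega R) d L (J : Omega -> edge d L -> R)
  (E : Omega -> SL d L -> SL d L -> R) : Prop :=
  forall (A : edge d L -> set R) (B : SL d L -> SL d L -> set R),
    (forall b, measurable (A b)) -> (forall s s', measurable (B s s')) ->
    P [set w | (forall b, A b (J w b)) /\ (forall s s', B s s' (E w s s'))] =
    ((\prod_(b : edge d L) P [set w | A b (J w b)])
       * P [set w | forall s s', B s s' (E w s s')])%E.

Definition nedges d L : nat := #|{: edge d L}|.

Definition nflex_gt {R : realDomainType} d L (delta : R) (J : edge d L -> R)
  (E : SL d L -> SL d L -> R) : nat :=
  #|[pred b : edge d L | delta < `| flex J E b |]|.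

(* Main.v *)
Require Import Defs.
From HB Require Import structures.
From mathcomp Require Import all_boot all_order all_algebra.
From mathcomp Require Import all_classical all_reals all_analysis.
From mathcomp Require Import ring lra measurable_realfun.
Import Order.TTheory GRing.Theory Num.Theory.
Local Open Scope classical_set_scope.
Local Open Scope ring_scope.
Set Implicit Arguments. Unset Strict Implicit. Unset Printing Implicit Defensive.

Section Det.
Variables (R : realType) (d L : nat).
Local Notation Ed := (edge d L).
Local Notation S := (SL d L).

Lemma mkS_proof (eta : spin d L) : [exists eta', Defs.induced eta == Defs.induced eta'].
Proof. by apply/existsP; exists eta. Qed.
Definition mkS (eta : spin d L) : S := exist _ (Defs.induced eta) (mkS_proof eta).

Definition s0 : S := mkS [ffun _ => true].

Lemma exS (b : Ed) (pm : bool) : exists s : S, val s b == pm.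
Proof.
case: pm.
  exists s0; rewrite /= /Defs.induced ffunE eqb_id.
  by apply/forall_inP => x _; apply/forall_inP => y _; rewrite !ffunE.
have /existsP [x /existsP [y /andP [hxy /eqP he]]] := valP b.
have xy : x != y.
  apply/eqP => exy; move: hxy; rewrite exy /adjb => /existsP [i /andP [h _]].
  by move: h; rewrite orbb => /eqP /esym /n_Sn.
exists (mkS [ffun z => z == x]); rewrite /= /Defs.induced ffunE eqbF_neg.
apply/negP => /forall_inP H.
have hx : x \in val b by rewrite he !inE eqxx.
have hy : y \in val b by rewrite he !inE eqxx orbT.
have := H x hx => /forall_inP /(_ y hy).
by rewrite !ffunE eqxx [y == x]eq_sym (negbTE xy).
Qed.

Definition s1 b pm : S := xchoose (exS b pm).
Lemma s1P b pm : val (s1 b pm) b == pm.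
Proof. exact: (xchooseP (exS b pm)). Qed.

Variables (J : Ed -> R) (E : S -> S -> R) (b : Ed).

Definition Vf (s : S) : R := - (\sum_(e | e != b) J e * ev s e) - E s0 s.
Definition Wf (s : S) : R := ham J s - E s0 s.

Lemma W_V s : Wf s = - (J b * ev s b) + Vf s.
Proof.
rewrite /Wf /Vf /ham.
rewrite (bigD1 b) //= opprD addrA.
by do 2 congr (_ - _ - _).
Qed.

Definition amin pm : R :=
  Vf (Order.arg_min (s1 b pm) (fun s : S => val s b == pm) Vf).

Lemma aminP pm : (forall s : S, val s b == pm -> amin pm <= Vf s) /\
   exists2 s : S, val s b == pm & Vf s = amin pm.
Proof.
rewrite /amin; case: (@arg_minP _ _ _ (s1 b pm) (fun s : S => val s b == pm) Vf (s1P b pm)) => i Hi Hmin; split; last by exists i.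
by move=> s Hs; apply: Hmin.
Qed.

Definition gf : R := amin true - amin false.


Lemma ev_class (s : S) pm : val s b == pm -> ev s b = sgnb pm :> R.
Proof. by rewrite /ev => /eqP ->. Qed.

Hypothesis hE : cocycle E.

Lemma Ecoc (s s' : S) : E s s' = E s0 s' - E s0 s.
Proof. by rewrite (proj2 hE s0 s s') addrC addKr. Qed.

Lemma prec_W (s s' : S) : prec_le J E s s' = (Wf s <= Wf s').
Proof.
rewrite /prec_le /Wf Ecoc; apply/idP/idP => h; lra.
Qed.

Lemma W_class (s : S) (pm : bool) : val s b == pm -> Wf s = - (J b * sgnb pm) + Vf s.
Proof. by move=> h; rewrite W_V (ev_class h). Qed.

Lemma sigma_min (pm : bool) : exists sp, sigma J E b pm = Some sp /\ val sp b == pm /\ Vf sp = amin pm.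
Proof.
have [Hle [st hst Vst]] := aminP pm.
rewrite /sigma; case: pickP.
  move=> x /andP [hx /forallP H]; exists x; split => //; split => //.
  apply/le_anti; rewrite Hle // andbT.
  have := H st; rewrite hst /= prec_W (W_class hx) (W_class hst) lerD2l => h.
  by rewrite -Vst.
move=> H; exfalso; have := H st; rewrite hst /=.
move/negP; apply; apply/forallP => s'; apply/implyP => hs'.
by rewrite prec_W (W_class hst) (W_class hs') lerD2l Vst Hle.
Qed.

Lemma flex_eq : flex J E b = `| gf - 2 * J b |.
Proof.
have [sp [Hp [hp Vp]]] := sigma_min true.
have [sm [Hm [hm Vm]]] := sigma_min false.
rewrite /flex Hp Hm.
have hsp : ham J sp = - J b + amin true + E s0 sp.
  by move: (W_class hp); rewrite /Wf Vp /= mulr1 => /eqP; rewrite subr_eq => /eqP ->.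
have hsm : ham J sm = J b + amin false + E s0 sm.
  by move: (W_class hm); rewrite /Wf Vm /= mulrN1 opprK => /eqP; rewrite subr_eq => /eqP ->.
have hsum : \sum_e J e * (ev sp e - ev sm e) = - ham J sp + ham J sm.
  by rewrite /ham opprK -sumrB; apply: eq_bigr => e _; rewrite mulrBr.
rewrite hsum Ecoc hsp hsm /gf; apply: congr1; ring.
Qed.

End Det.

Section Lip.
Variables (R : realType) (d L : nat).
Local Notation Ed := (edge d L).
Local Notation S := (SL d L).
Variables (J J' : Ed -> R) (E E' : S -> S -> R) (b : Ed) (k : R).
Hypothesis hk : forall s, `|Vf J E b s - Vf J' E' b s| <= k.

Lemma amin_lip (pm : bool) : `|amin J E b pm - amin J' E' b pm| <= k.
Proof.
have [Hle [st hst Vst]] := aminP J E b pm.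
have [Hle' [st' hst' Vst']] := aminP J' E' b pm.
have h1 := hk st; have h2 := hk st'.
have a1 := Hle _ hst'; have a2 := Hle' _ hst.
rewrite ler_norml; move: h1 h2; rewrite !ler_norml => /andP [h1 h1'] /andP [h2 h2'].
apply/andP; split; lra.
Qed.

Lemma gf_lip : `|gf J E b - gf J' E' b| <= 2 * k.
Proof.
have := amin_lip true; have := amin_lip false; rewrite /gf !ler_norml.
move=> /andP [h1 h1'] /andP [h2 h2']; apply/andP; split; lra.
Qed.

End Lip.

Lemma Vdiff (R : realType) d L (J J' : edge d L -> R) E E' b (s : SL d L) :
  `|Vf J E b s - Vf J' E' b s| <=
     \sum_(e | e != b) `|J e - J' e| + `|E (s0 d L) s - E' (s0 d L) s|.
Proof.
have -> : Vf J E b s - Vf J' E' b s =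
   - (\sum_(e | e != b) (J e - J' e) * ev s e) - (E (s0 d L) s - E' (s0 d L) s).
  rewrite /Vf (eq_bigr (fun e => J e * ev s e - J' e * ev s e) (fun e _ => mulrBl _ _ _)).
  rewrite sumrB; ring.
apply: (le_trans (ler_normB _ _)); rewrite normrN lerD2r.
apply: (le_trans (ler_norm_sum _ _ _)); apply: ler_sum => e _.
by rewrite normrM /ev; case: (val s e); rewrite /= ?normrN normr1 mulr1.
Qed.

Section ProbHelp.
Variables (dO : measure_display) (Omega : measurableType dO) (R : realType)
  (P : probability Omega R).

Definition pr (A : set Omega) : R := fine (P A).

Lemma prE A : measurable A -> P A = (pr A)%:E.
Proof.
move=> mA; rewrite /pr fineK // ge0_fin_numE ?measure_ge0 //.
by apply: (le_lt_trans (probability_le1 P mA)); rewrite ltry.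
Qed.

Lemma pr_ge0 A : 0 <= pr A.
Proof. exact/fine_ge0/measure_ge0. Qed.

Lemma pr_le1 A : measurable A -> pr A <= 1.
Proof. by move=> mA; have := probability_le1 P mA; rewrite prE // lee_fin. Qed.

Lemma pr_le A B : measurable A -> measurable B -> A `<=` B -> pr A <= pr B.
Proof.
move=> mA mB AB; rewrite -lee_fin -!prE //.
by apply: le_measure => //; rewrite inE.
Qed.

Lemma prC A : measurable A -> pr (~` A) = 1 - pr A.
Proof.
move=> mA; apply/EFin_inj; rewrite -prE; last exact: measurableC.
by rewrite probability_setC // prE // EFinB.
Qed.

Lemma prT : pr setT = 1.
Proof. by rewrite /pr probability_setT. Qed.

Lemma prU2 A B : measurable A -> measurable B -> pr (A `|` B) <= pr A + pr B.
Proof.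
move=> mA mB; rewrite -lee_fin EFinD -!prE //; last exact: measurableU.
exact: measureU2.
Qed.

Lemma prU2_disj A B : measurable A -> measurable B -> A `&` B = set0 ->
  pr (A `|` B) = pr A + pr B.
Proof.
move=> mA mB AB; apply/EFin_inj; rewrite EFinD -!prE //; last exact: measurableU.
exact: measureU.
Qed.

Lemma bigU_ex (I : eqType) (r : seq I) (p : pred I) (F : I -> set Omega) w :
  (\big[setU/set0]_(i <- r | p i) F i) w <-> exists i, [/\ i \in r, p i & F i w].
Proof.
elim: r => [|i r IH]; first by rewrite big_nil; split => [[]|[i []]].
rewrite big_cons; case: ifP => pi.
  split.
    case => [Fi|/IH [j [jr pj Fj]]]; first by exists i; rewrite inE eqxx.
    by exists j; rewrite inE jr orbT.
  case => j []; rewrite inE => /orP [/eqP ->|jr] pj Fj; first by left.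
  by right; apply/IH; exists j.
split; first by move/IH => [j [jr pj Fj]]; exists j; rewrite inE jr orbT.
case => j []; rewrite inE => /orP [/eqP ->|jr] pj Fj; first by rewrite pj in pi.
by apply/IH; exists j.
Qed.

Lemma bigU_meas (I : Type) (r : seq I) (p : pred I) (F : I -> set Omega) :
  (forall i, measurable (F i)) -> measurable (\big[setU/set0]_(i <- r | p i) F i).
Proof. by move=> mF; apply: bigsetU_measurable => i _. Qed.

Lemma pr_sub (I : Type) (r : seq I) (p : pred I) (F : I -> set Omega) :
  (forall i, measurable (F i)) ->
  pr (\big[setU/set0]_(i <- r | p i) F i) <= \sum_(i <- r | p i) pr (F i).
Proof.
move=> mF; elim: r => [|i r IH]; first by rewrite !big_nil /pr measure0.
rewrite !big_cons; case: ifP => // pi.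
apply: (le_trans (prU2 (mF i) (bigU_meas _ _ mF))); lra.
Qed.

Lemma pr_add (I : eqType) (r : seq I) (p : pred I) (F : I -> set Omega) :
  uniq r -> (forall i, measurable (F i)) ->
  (forall i j, p i -> p j -> i != j -> F i `&` F j = set0) ->
  pr (\big[setU/set0]_(i <- r | p i) F i) = \sum_(i <- r | p i) pr (F i).
Proof.
move=> + mF dF; elim: r => [|i r IH]; first by rewrite !big_nil /pr measure0.
move=> /= /andP [ir ur]; rewrite !big_cons; case: ifP => pi; last exact: IH.
have mU := bigU_meas r p mF.
rewrite prU2_disj //; first by congr (_ + _); exact: IH.
apply/seteqP; split => // w [Fi /bigU_ex [j [jr pj Fj]]].
have ij : i != j by apply/eqP => eij; move: ir; rewrite eij jr.
by rewrite -(dF _ _ pi pj ij); split.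
Qed.

Lemma meas_forall (I : finType) (F : I -> set Omega) :
  (forall i, measurable (F i)) -> measurable [set w | forall i, F i w].
Proof.
move=> mF; have -> : [set w | forall i, F i w] = \bigcap_(i in setT) F i.
  by apply/seteqP; split => w /= H i //; apply: H.
by apply: fin_bigcap_measurable => //; exact: finite_finset.
Qed.

End ProbHelp.

Lemma normal_itv_le (R : realType) (a r : R) : 0 <= r ->
  (normal_prob 0 1 `[(a - r)%R, (a + r)%R]%classic <= (normal_peak (1:R) * (2 * r))%:E)%E.
Proof.
move=> r0; rewrite /normal_prob.
apply: (@le_trans _ _ (\int[lebesgue_measure]_(x in `[(a - r)%R, (a + r)%R]%classic) (normal_peak (1:R))%:E))%E.
  apply: ge0_le_integral => //=.
  - by move=> x _; rewrite lee_fin normal_pdf_ge0.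
  - by apply/measurable_EFinP; apply: measurable_funTS; exact: measurable_normal_pdf.
  - by move=> x _; rewrite lee_fin normal_pdf_ub ?oner_neq0.
rewrite integral_cst //= lebesgue_measure_itv /= lte_fin.
case: ifP => _; last by rewrite mule0 lee_fin mulr_ge0 ?normal_peak_ge0 ?mulr_ge0.
by rewrite -EFinB -EFinM lee_fin; apply: ler_wpM2l; [exact: normal_peak_ge0| lra].
Qed.

Section Tail.
Variables (dO : measure_display) (Omega : measurableType dO) (R : realType)
  (P : probability Omega R).

Lemma mpre (X : Omega -> R) (A : set R) : measurable_fun setT X -> measurable A ->
  measurable [set w | A (X w)].
Proof. by move=> mX mA; have := mX measurableT A mA; rewrite setTI. Qed.

Lemma tail (X : Omega -> R) (tau : R) : measurable_fun setT X -> 0 < tau ->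
  exists M0 : R, 0 < M0 /\ forall M, M0 <= M ->
    pr P [set w | ~ (-M <= X w < M)] <= tau.
Proof.
move=> mX tau0.
pose F (n : nat) := [set w | ~ (- n%:R <= X w < n%:R)].
have mF n : measurable (F n).
  have -> : F n = ~` [set w | `[- n%:R, n%:R[%classic (X w)].
    by apply/seteqP; split => w /=; rewrite in_itv.
  by apply/measurableC/mpre.
have FM (M : R) : measurable [set w | ~ (-M <= X w < M)].
  have -> : [set w | ~ (-M <= X w < M)] = ~` [set w | `[- M, M[%classic (X w)].
    by apply/seteqP; split => w /=; rewrite in_itv.
  by apply/measurableC/mpre.
have cap0 : \bigcap_n F n = set0.
  apply/seteqP; split => // w H.
  have := H (Num.truncn `|X w|).+1 I; apply.
  have := truncn_itv (normr_ge0 (X w)); case/andP => _.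
  move: (Num.truncn `|X w|).+1%:R => y hy; apply/andP; split.
    have := ler_norm (- X w); rewrite normrN; lra.
  have := ler_norm (X w); lra.
have ni : nonincreasing_seq F.
  move=> i j ij; apply/subsetPset => w /= Hw Hj; apply: Hw.
  have : (i%:R <= j%:R :> R) by rewrite ler_nat.
  lra.
have := @nonincreasing_cvg_mu _ _ _ P F _ mF _ ni.
rewrite cap0 measure0 => /(_ _ measurable0).
case/(_ _)/fine_cvgP.
  by apply: (le_lt_trans (probability_le1 P (mF 0%N))); rewrite ltry.
move=> _ /cvgr_dist_lt /(_ tau tau0) [N _ HN].
exists N.+1%:R; split => // M NM.
apply: (le_trans (pr_le P (FM M) (mF N) _)).
  move=> w /= H1 H2; apply: H1; have : (N%:R <= M :> R).
    by apply: le_trans NM; rewrite ler_nat.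
  lra.
have := HN N (leqnn N); rewrite /= sub0r normrN ger0_norm; last exact: pr_ge0.
by move/ltW.
Qed.

End Tail.

Section Cells.
Variables (R : realType) (d L : nat) (dO : measure_display) (Omega : measurableType dO)
  (P : probability Omega R) (J : Omega -> edge d L -> R)
  (E : Omega -> SL d L -> SL d L -> R).
Local Notation Ed := (edge d L).
Local Notation S := (SL d L).
Local Notation S0 := (s0 d L).
Hypothesis hJm : forall b, measurable_fun setT (fun w => J w b).
Hypothesis hEm : forall s s', measurable_fun setT (fun w => E w s s').
Hypothesis hJlaw : forall b (A : set R), measurable A ->
  P [set w | A (J w b)] = normal_prob 0 1 A.
Hypothesis hind : indep_JE P J E.
Hypothesis hcoc : forall w, cocycle (E w).
Variables (delta M eta : R) (N1 : nat).
Hypothesis delta0 : 0 < delta.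
Hypothesis eta0 : 0 < eta.
Hypothesis hN : 2 * M <= N1%:R * eta.
Hypothesis heta : 2 * ((#|{: Ed}|.+1)%:R * eta) <= delta.
Local Notation N := N1.+1.
Ltac hyps := have := eta0; have := delta0; have := hN; have := heta; intros.

Definition itv (k : nat) : set R := [set x | -M + k%:R * eta <= x < -M + k.+1%:R * eta].

Lemma itv_meas k : measurable (itv k).
Proof.
have -> : itv k = `[-M + k%:R * eta, -M + k.+1%:R * eta[%classic.
  by apply/seteqP; split => x /=; rewrite in_itv.
exact: measurable_itv.
Qed.

Lemma natS_eta (k : nat) : k.+1%:R * eta = k%:R * eta + eta.
Proof. by rewrite -addn1 natrD mulrDl mul1r. Qed.

Lemma itv_uniq i j (x : R) : itv i x -> itv j x -> i = j.
Proof.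
rewrite /itv /= => /andP [h1 h2] /andP [h3 h4].
have a : i%:R * eta < j.+1%:R * eta by lra.
have b : j%:R * eta < i.+1%:R * eta by lra.
move: a b; rewrite !ltr_pM2r // !ltr_nat !ltnS => a b.
by apply/eqP; rewrite eqn_leq a b.
Qed.

Lemma itv_close i (x y : R) : itv i x -> itv i y -> `|x - y| < eta.
Proof.
rewrite /itv /= natS_eta => /andP [h1 h2] /andP [h3 h4].
rewrite ltr_norml; apply/andP; split; lra.
Qed.

Definition idx (x : R) : 'I_N := inord (Num.truncn ((x + M) / eta)).

Lemma idxP (x : R) : -M <= x < M -> itv (idx x) x.
Proof.
move=> /andP [h1 h2].
have y0 : 0 <= (x + M) / eta by apply: divr_ge0; hyps; lra.
have /andP [t1 t2] := truncn_itv y0.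
have tN : (Num.truncn ((x + M) / eta) < N)%N.
  rewrite ltnS -(ler_nat R); apply: (le_trans t1).
  rewrite ler_pdivrMr //; hyps; lra.
rewrite /itv /idx /= inordK //.
move: t1 t2; rewrite ler_pdivlMr // ltr_pdivrMr // => t1 t2.
apply/andP; split; lra.
Qed.

Definition Rect (A : Ed -> set R) (B : S -> set R) : set Omega :=
  [set w | (forall e, A e (J w e)) /\
           (forall s s', (if s == S0 then B s' else setT) (E w s s'))].

Lemma Rect_meas A B : (forall e, measurable (A e)) -> (forall s, measurable (B s)) ->
  measurable (Rect A B).
Proof.
move=> mA mB.
have -> : Rect A B = [set w | forall e, [set w | A e (J w e)] w] `&`
   [set w | forall s, [set w | forall s', [set w | (if s == S0 then B s' else setT) (E w s s')] w] w].
  by [].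
apply: measurableI; apply: meas_forall => e.
  exact: mpre.
apply: meas_forall => s'; apply: mpre => //.
by case: ifP => _; [exact: mB | exact: measurableT].
Qed.

Lemma Rect_prod (b : Ed) (I : set R) (A0 : Ed -> set R) (B : S -> set R) :
  measurable I -> (forall e, measurable (A0 e)) -> (forall s, measurable (B s)) ->
  P (Rect (fun e => if e == b then I else A0 e) B) =
  (P [set w | I (J w b)] * P (Rect (fun e => if e == b then setT else A0 e) B))%E.
Proof.
move=> mI mA mB.
have mB' : forall s s', measurable (if s == S0 then B s' else setT).
  by move=> s s'; case: ifP => _; [exact: mB | exact: measurableT].
have mA1 : forall e, measurable (if e == b then I else A0 e).
  by move=> e; case: ifP => _; [exact: mI | exact: mA].
have mA2 : forall e, measurable (if e == b then setT else A0 e).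
  by move=> e; case: ifP => _; [exact: measurableT | exact: mA].
rewrite /Rect (hind mA1 mB') (hind mA2 mB').
rewrite [in RHS](bigD1 b) //= [in LHS](bigD1 b) //= !eqxx.
have -> : [set w | setT (J w b)] = setT by apply/seteqP; split.
rewrite probability_setT mul1e muleA; congr ((_ * _) * _)%E.
by apply: eq_bigr => e /negbTE ->.
Qed.


Local Notation K := ({ffun Ed -> 'I_N} * {ffun S -> 'I_N})%type.

Definition Qc (b : Ed) (k : K) :=
  Rect (fun e => if e == b then setT else itv (k.1 e)) (fun s => itv (k.2 s)).

Definition cval (b : Ed) (k : K) : R :=
  match pselect (exists w, Qc b k w) with
  | left h => gf (J (projT1 (cid h))) (E (projT1 (cid h))) b
  | right _ => 0 end.

Definition Int (b : Ed) (k : K) : set R :=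
  `[cval b k / 2 - delta, cval b k / 2 + delta]%classic.

Definition Qd (b : Ed) (k : K) :=
  Rect (fun e => if e == b then Int b k else itv (k.1 e)) (fun s => itv (k.2 s)).

Definition inM : set R := `[-M, M[%classic.

Definition Gs := [set w | (forall e, inM (J w e)) /\ (forall s, inM (E w S0 s))].

Definition Cb (b : Ed) := ~` Gs `|` \big[setU/set0]_(k : K | k.1 b == ord0) Qd b k.

Lemma Qc_meas b k : measurable (Qc b k).
Proof.
apply: Rect_meas => [e|s]; last exact: itv_meas.
by case: ifP => _; [exact: measurableT | exact: itv_meas].
Qed.

Lemma Int_meas b k : measurable (Int b k).
Proof. exact: measurable_itv. Qed.

Lemma Qd_meas b k : measurable (Qd b k).
Proof.
apply: Rect_meas => [e|s]; last exact: itv_meas.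
by case: ifP => _; [exact: Int_meas | exact: itv_meas].
Qed.

Lemma Gs_meas : measurable Gs.
Proof.
apply: measurableI; apply: meas_forall => i; apply: mpre => //; exact: measurable_itv.
Qed.

Lemma Cb_meas b : measurable (Cb b).
Proof.
apply: measurableU; first exact/measurableC/Gs_meas.
apply: bigU_meas; exact: Qd_meas.
Qed.

Lemma prO : pr P (~` Gs) <=
  \sum_(e : Ed) pr P (~` [set w | inM (J w e)]) +
  \sum_(s : S) pr P (~` [set w | inM (E w S0 s)]).
Proof.
have mT1 e : measurable (~` [set w | inM (J w e)]).
  by apply/measurableC/mpre => //; exact: measurable_itv.
have mT2 s : measurable (~` [set w | inM (E w S0 s)]).
  by apply/measurableC/mpre => //; exact: measurable_itv.
have mU1 := bigU_meas (index_enum Ed) xpredT mT1.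
have mU2 := bigU_meas (index_enum S) xpredT mT2.
apply: le_trans (le_trans (prU2 P mU1 mU2) _).
  apply: pr_le; [exact/measurableC/Gs_meas | exact: measurableU |].
  move=> w /= /not_andP [/existsNP [e He] | /existsNP [s Hs]]; [left | right];
    apply/bigU_ex; [exists e | exists s]; split => //; exact: mem_index_enum.
by apply: lerD; apply: pr_sub.
Qed.

Lemma Qc_disj b (k k' : K) : k.1 b == ord0 -> k'.1 b == ord0 -> k != k' ->
  Qc b k `&` Qc b k' = set0.
Proof.
move=> kb k'b kk; apply/seteqP; split => // w [[H1 H2] [H1' H2']].
apply: (negP kk); apply/eqP.
case: k kb kk H1 H2 => k1 k2; case: k' k'b H1' H2' => k1' k2' /= k'b H1' H2' kb kk H1 H2.
congr pair; apply/ffunP.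
  move=> e; case: (eqVneq e b) => [->|eb]; first by rewrite (eqP kb) (eqP k'b).
  have := H1 e; have := H1' e; rewrite (negbTE eb) => h' h.
  by apply/val_inj/(itv_uniq h h').
move=> s; have := H2 S0 s; have := H2' S0 s; rewrite eqxx => h' h.
by apply/val_inj/(itv_uniq h h').
Qed.

Lemma sumQc b : \sum_(k : K | k.1 b == ord0) pr P (Qc b k) <= 1.
Proof.
rewrite -pr_add //.
- by apply: pr_le1; apply: bigU_meas => k; exact: Qc_meas.
- exact: index_enum_uniq.
- by move=> k; exact: Qc_meas.
- by move=> k k' h h' kk; apply: Qc_disj.
Qed.

Lemma Qd_pr b k : pr P (Qd b k) <= normal_peak (1:R) * (2 * delta) * pr P (Qc b k).
Proof.
have mI := Int_meas b k.
have mQc := Qc_meas b k.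
have mJI : measurable [set w | Int b k (J w b)] := mpre (hJm b) mI.
have e1 : P (Qd b k) = (pr P [set w | Int b k (J w b)] * pr P (Qc b k))%:E.
  rewrite EFinM -!prE //.
  rewrite /Qd Rect_prod //; first by move=> e; exact: itv_meas.
  by move=> s; exact: itv_meas.
rewrite /pr e1 /= ler_wpM2r //; first exact: pr_ge0.
have := normal_itv_le (cval b k / 2) (ltW delta0).
rewrite -(hJlaw b mI).
by rewrite prE // lee_fin.
Qed.


Lemma sum_neq_b (b : Ed) (f : Ed -> R) : (forall e, e != b -> f e <= eta) ->
  \sum_(e | e != b) f e <= #|{: Ed}|%:R * eta.
Proof.
move=> hf; apply: (le_trans (ler_sum _ hf)).
rewrite (_ : \sum_(e | e != b) eta = eta *+ #|[pred e | e != b]|); last by rewrite -sumr_const.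
rewrite -[eta *+ _]mulr_natl ler_wpM2r //; first by hyps; lra.
by rewrite ler_nat max_card.
Qed.

Lemma bad_sub b w : `|flex (J w) (E w) b| <= delta -> Cb b w.
Proof.
move=> hf.
case: (pselect (Gs w)) => [[G1 G2]|nG]; last by left.
right.
pose k : K := ([ffun e => if e == b then ord0 else idx (J w e)],
               [ffun s => idx (E w S0 s)]).
have inMP x : inM x -> -M <= x < M by rewrite /inM /= in_itv.
have hQ2 : forall s s', (if s == S0 then itv (k.2 s') else setT) (E w s s').
  move=> s s'; case: ifP => [/eqP ->|_] //.
  by rewrite /k /= ffunE; apply: idxP; apply: inMP; apply: G2.
have hQc : Qc b k w.
  split => // e; case: ifP => eb //.
  by rewrite /k /= ffunE eb; apply: idxP; apply: inMP; apply: G1.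
apply/bigU_ex; exists k; split; [exact: mem_index_enum | by rewrite /k /= ffunE eqxx |].
split => // e; case: ifP => eb; last by have := hQc.1 e; rewrite eb.
move/eqP: eb => ->.
rewrite /Int /cval; case: pselect => [h|nh]; last by exfalso; apply: nh; exists w.
move: (projT2 (cid h)); set w' := projT1 (cid h) => hw'.
have dJ e0 : e0 != b -> `|J w e0 - J w' e0| <= eta.
  move=> eb0; have := hQc.1 e0; have := hw'.1 e0; rewrite (negbTE eb0) => h2 h1.
  exact/ltW/(itv_close h1 h2).
have dE s : `|E w S0 s - E w' S0 s| <= eta.
  have := hQc.2 S0 s; have := hw'.2 S0 s; rewrite eqxx => h2 h1.
  exact/ltW/(itv_close h1 h2).
have hV s : `|Vf (J w) (E w) b s - Vf (J w') (E w') b s| <= (#|{: Ed}|.+1)%:R * eta.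
  apply: (le_trans (Vdiff _ _ _ _ _ _)); rewrite natS_eta.
  by apply: lerD; [apply: sum_neq_b | apply: dE].
have hg := gf_lip hV.
move: hf; rewrite (flex_eq _ _ (hcoc w)) normr_id => hf.
rewrite /= in_itv /=.
move: hg hf; rewrite !ler_norml => /andP [g1 g2] /andP [f1 f2].
hyps; apply/andP; split; lra.
Qed.

Lemma Cb_pr b : pr P (~` Gs) <= normal_peak (1:R) * delta ->
  pr P (Cb b) <= 3 * (normal_peak (1:R) * delta).
Proof.
move=> hO.
have mU := bigU_meas (index_enum K) (fun k : K => k.1 b == ord0) (Qd_meas b).
apply: (le_trans (prU2 P (measurableC Gs_meas) mU)).
have h1 := pr_sub P (index_enum K) (fun k : K => k.1 b == ord0) (Qd_meas b).
have h2 : \sum_(k : K | k.1 b == ord0) pr P (Qd b k) <=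
    normal_peak (1:R) * (2 * delta) * \sum_(k : K | k.1 b == ord0) pr P (Qc b k).
  rewrite mulr_sumr; apply: ler_sum => k _; exact: Qd_pr.
have h3 := sumQc b.
have p0 := normal_peak_ge0 (1:R).
have h4 : normal_peak (1:R) * (2 * delta) * \sum_(k : K | k.1 b == ord0) pr P (Qc b k)
   <= normal_peak (1:R) * (2 * delta).
  rewrite -[X in _ <= X]mulr1; apply: ler_wpM2l => //.
  by apply: mulr_ge0 => //; hyps; lra.
have hU := le_trans h1 (le_trans h2 h4).
clear h1 h2 h3 h4 mU.
move: hU hO; set u := pr P _; set o := pr P _; move=> hU hO.
have := delta0; lra.
Qed.

End Cells.

Section Markov.
Variables (dO : measure_display) (Omega : measurableType dO) (R : realType)
  (P : probability Omega R) (I : finType) (C : I -> set Omega).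
Hypothesis mC : forall i, measurable (C i).

Definition cnt w : {set I} := [set i | `[< C i w >]].
Definition FS (A : {set I}) := [set w | cnt w = A].

Lemma FS_meas A : measurable (FS A).
Proof.
have -> : FS A = [set w | forall i, (if i \in A then C i else ~` C i) w].
  apply/seteqP; split => w /=.
    move=> <- i; rewrite inE; case: asboolP => //.
  move=> H; apply/setP => i; rewrite inE; have := H i.
  by case: ifP => iA h; apply/asboolP.
apply: meas_forall => i; case: ifP => _; [exact: mC | exact/measurableC/mC].
Qed.

Lemma FS_disj A B : A != B -> FS A `&` FS B = set0.
Proof.
move=> AB; apply/seteqP; split => // w [/= hA hB].
by move: AB; rewrite -hA -hB eqxx.
Qed.

Lemma cntP i w : (i \in cnt w) <-> C i w.
Proof. by rewrite inE; split => /asboolP. Qed.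

Lemma bigFS (q : pred {set I}) w :
  (\big[setU/set0]_(A : {set I} | q A) FS A) w <-> q (cnt w).
Proof.
split; first by move/bigU_ex => [A [_ qA /= ->]].
by move=> h; apply/bigU_ex; exists (cnt w); split => //; exact: mem_index_enum.
Qed.

Lemma pr_bigFS (q : pred {set I}) :
  pr P (\big[setU/set0]_(A : {set I} | q A) FS A) = \sum_(A : {set I} | q A) pr P (FS A).
Proof.
apply: pr_add; [exact: index_enum_uniq | exact: FS_meas |].
by move=> A B _ _; exact: FS_disj.
Qed.

Lemma pr_C i : pr P (C i) = \sum_(A : {set I} | i \in A) pr P (FS A).
Proof.
rewrite -pr_bigFS; congr (pr P _); apply/seteqP; split => w.
  by move=> h; apply/bigFS; apply/cntP.
by move/bigFS/cntP.
Qed.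

Lemma Bc_meas (t : R) : measurable [set w | t <= #|cnt w|%:R].
Proof.
have -> : [set w | t <= #|cnt w|%:R] = \big[setU/set0]_(A : {set I} | t <= #|A|%:R) FS A.
  by apply/seteqP; split => w; [move=> h; apply/bigFS | move/bigFS].
exact: bigU_meas FS_meas.
Qed.

Lemma markov_cnt (t : R) : 0 <= t ->
  t * pr P [set w | t <= #|cnt w|%:R] <= \sum_i pr P (C i).
Proof.
move=> t0.
have -> : [set w | t <= #|cnt w|%:R] = \big[setU/set0]_(A : {set I} | t <= #|A|%:R) FS A.
  by apply/seteqP; split => w; [move=> h; apply/bigFS | move/bigFS].
rewrite pr_bigFS.
rewrite [X in _ <= X](eq_bigr (fun i => \sum_(A : {set I} | i \in A) pr P (FS A))); last by move=> i _; rewrite pr_C.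
have -> : \sum_i \sum_(A : {set I} | i \in A) pr P (FS A) = \sum_(A : {set I}) (#|A|%:R * pr P (FS A)).
  under eq_bigr => i _ do rewrite big_mkcond /=.
  rewrite exchange_big /=; apply: eq_bigr => A _.
  by rewrite -big_mkcond /= sumr_const mulr_natl.
rewrite [X in _ <= X](bigID (fun A : {set I} => t <= #|A|%:R)) /=.
have h1 : t * \sum_(A : {set I} | t <= #|A|%:R) pr P (FS A) <= \sum_(A : {set I} | t <= #|A|%:R) (#|A|%:R * pr P (FS A)).
  rewrite mulr_sumr; apply: ler_sum => A hA; apply: ler_wpM2r => //; exact: pr_ge0.
apply: (le_trans h1); rewrite lerDl.
by apply: sumr_ge0 => A _; apply: mulr_ge0 => //; exact: pr_ge0.
Qed.

End Markov.

Lemma edge_exists (d L : nat) : (0 < d)%N -> (0 < L)%N -> (0 < #|{: edge d L}|)%N.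
Proof.
move=> hd hL.
have h0 : (0 < 2 * L + 1)%N by rewrite addn1.
have h1 : (1 < 2 * L + 1)%N by rewrite addn1 ltnS muln_gt0.
pose i0 : 'I_d := Ordinal hd.
pose x : site d L := [ffun _ => Ordinal h0].
pose y : site d L := [ffun i => if i == i0 then Ordinal h1 else Ordinal h0].
have hxy : adjb x y.
  apply/existsP; exists i0; rewrite !ffunE eqxx /=; apply/forallP => j.
  by apply/implyP => /negbTE hj; rewrite !ffunE hj.
have pe : [exists x', exists y', adjb x' y' && ([set x; y]%SET == [set x'; y']%SET)].
  by apply/existsP; exists x; apply/existsP; exists y; rewrite hxy eqxx.
pose e : edge d L := exist _ [set x; y]%SET pe.
by apply/card_gt0P; exists e.
Qed.

Unset Implicit Arguments.

Theorem lemma4p1 (R : realType) (d : nat) (hd : (0 < d)%N) (eps : R) (heps : 0 < eps) :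
  exists delta : R, 0 < delta /\
  forall (L : nat), (0 < L)%N ->
  forall (dO : measure_display) (Omega : measurableType dO) (P : probability Omega R)
    (J : Omega -> edge d L -> R) (E : Omega -> SL d L -> SL d L -> R),
    (forall b, measurable_fun setT (fun w => J w b)) ->
    (forall s s', measurable_fun setT (fun w => E w s s')) ->
    (forall b (A : set R), measurable A ->
        P [set w | A (J w b)] = normal_prob 0 1 A) ->
    indep_JE P J E ->
    (forall w, cocycle (E w)) ->
    exists Beps : set Omega,
      [/\ measurable Beps,
          ((1 - eps)%:E < P Beps)%E &
          forall w, Beps w ->
            (1 - eps) * (nedges d L)%:R < (nflex_gt delta (J w) (E w))%:R].
Proof.
pose peak := normal_peak (1:R).
have p0 : 0 < peak by apply: normal_peak_gt0; exact: oner_neq0.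
pose delta := eps ^+ 2 / (4 * peak).
have delta0 : 0 < delta by apply: divr_gt0; [exact: exprn_gt0 | apply: mulr_gt0].
exists delta; split => //.
move=> L L0 dO Omega P J E hJm hEm hJlaw hind hcoc.
pose n := #|{: edge d L}|.
have n0 : (0 < n)%N := @edge_exists d L hd L0.
pose m := #|{: SL d L}|.
have nm0 : (0 < (n + m)%:R :> R) by rewrite ltr0n addn_gt0 n0.
pose tau := peak * delta / (n + m)%:R.
have tau0 : 0 < tau by apply: divr_gt0 => //; exact: mulr_gt0.
have [fJ hfJ] := choice (fun e => tail P (hJm e) tau0).
have [fE hfE] := choice (fun s => tail P (hEm (s0 d L) s) tau0).
pose M := 1 + \sum_e `|fJ e| + \sum_s `|fE s|.
have sJ0 : 0 <= \sum_e `|fJ e| by apply: sumr_ge0.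
have sE0 : 0 <= \sum_s `|fE s| by apply: sumr_ge0.
have fJM e : fJ e <= M.
  have : `|fJ e| <= \sum_e `|fJ e|.
    by rewrite (bigD1 e) //= lerDl; apply: sumr_ge0.
  have := ler_norm (fJ e); rewrite /M; lra.
have fEM s : fE s <= M.
  have : `|fE s| <= \sum_s `|fE s|.
    by rewrite (bigD1 s) //= lerDl; apply: sumr_ge0.
  have := ler_norm (fE s); rewrite /M; lra.
have M0 : 0 < M by rewrite /M; lra.
pose eta := delta / (2 * n.+1%:R).
have eta0 : 0 < eta by apply: divr_gt0 => //; rewrite mulr_gt0 // ltr0n.
pose N1 := (Num.truncn (2 * M / eta)).+1.
have hN : 2 * M <= N1%:R * eta.
  have y0 : 0 <= 2 * M / eta by apply: divr_ge0; lra.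
  have /andP [_ t2] := truncn_itv y0.
  by move: t2; rewrite ltr_pdivrMr // => /ltW.
have heta : 2 * (n.+1%:R * eta) <= delta.
  have hn1 : (n.+1%:R : R) != 0 by rewrite pnatr_eq0.
  have -> : 2 * (n.+1%:R * eta) = delta by rewrite /eta; field.
  by [].
have hO : pr P (~` Gs J E M) <= peak * delta.
  apply: (le_trans (prO P hJm hEm M)).
  have h1 : \sum_e pr P (~` [set w | inM M (J w e)]) <= tau *+ n.
    rewrite -sumr_const; apply: ler_sum => e _.
    have -> : ~` [set w | inM M (J w e)] = [set w | ~ (- M <= J w e < M)].
      by apply/seteqP; split => w /=; rewrite /inM /= in_itv.
    exact: (proj2 (hfJ e)).
  have h2 : \sum_s pr P (~` [set w | inM M (E w (s0 d L) s)]) <= tau *+ m.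
    rewrite -sumr_const; apply: ler_sum => s _.
    have -> : ~` [set w | inM M (E w (s0 d L) s)] = [set w | ~ (- M <= E w (s0 d L) s < M)].
      by apply/seteqP; split => w /=; rewrite /inM /= in_itv.
    exact: (proj2 (hfE s)).
  have -> : peak * delta = tau *+ n + tau *+ m.
    by rewrite -mulrnDr -mulr_natr /tau -mulrA mulVf ?mulr1 // gt_eqF.
  exact: lerD.
have hC b : pr P (Cb J E delta M eta N1 b) <= 3 * (peak * delta).
  exact: (Cb_pr hJm hEm hJlaw hind delta0 eta0 hN heta b hO).
have mC := Cb_meas hJm hEm delta M eta N1.
pose t := eps * n%:R.
have t0 : 0 < t by rewrite mulr_gt0 // ltr0n.
pose Bc := [set w | t <= #|cnt (Cb J E delta M eta N1) w|%:R].
have mBc : measurable Bc := Bc_meas mC t.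
have hM := markov_cnt P mC (ltW t0).
have hS : \sum_b pr P (Cb J E delta M eta N1 b) <= n%:R * (3 * (peak * delta)).
  rewrite mulr_natl -sumr_const; apply: ler_sum => b _; exact: hC.
have hpd : peak * delta = eps ^+ 2 / 4.
  have hp : peak != 0 by rewrite gt_eqF.
  by rewrite /delta; field.
have hBc : pr P Bc < eps.
  have h := le_trans hM hS; rewrite hpd in h.
  have : t * pr P Bc < t * eps.
    apply: (le_lt_trans h); rewrite /t.
    have X0 : 0 < eps * n%:R * eps by rewrite mulr_gt0 // mulr_gt0 // ltr0n.
    have -> : n%:R * (3 * (eps ^+ 2 / 4)) = 3 / 4 * (eps * n%:R * eps) by ring.
    lra.
  by rewrite ltr_pM2l.
exists (~` Bc); split.
- exact: measurableC.
- by rewrite probability_setC // prE // -EFinB lte_fin; lra.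
move=> w /= hw.
have hlt : (#|cnt (Cb J E delta M eta N1) w|%:R < t) by rewrite ltNge; apply/negP.
set c := cnt (Cb J E delta M eta N1) w in hlt.
have hsub : ~: c \subset [pred b | delta < `|flex (J w) (E w) b|].
  apply/fintype.subsetP => b; rewrite inE => hb; rewrite inE /=.
  rewrite ltNge; apply/negP => hle; move/negP: hb; apply.
  by apply/cntP; exact: (bad_sub hcoc delta0 eta0 hN heta hle).
have hcard := subset_leq_card hsub.
have hcC : #|~: c| = (n - #|c|)%N by rewrite cardsCs finset.setCK.
have hc : (#|c| <= n)%N by exact: max_card.
rewrite /nflex_gt /nedges.
apply: (lt_le_trans _ (_ : ((n - #|c|)%N%:R <= _))).
  by rewrite natrB // /t in hlt *; lra.
by rewrite ler_nat -hcC.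
Qed.
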